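(* Let $f:\mathbb R\to(-\infty,\infty]$ be convex, finite for some $\theta>0$ and infinite for all $\theta<0$. Let $\Gamma=\Gamma(f^* )$, $\vartheta=\vartheta(f)$ and $\underline\psi=\inf\Phi_f$. Then $f^\natural\equiv-\infty$ and $\vartheta=-\infty$ when $\Gamma=-\infty$. Otherwise $\vartheta\ge0$ and $f^\natural(\theta)=f(\theta)$ for $0\le\theta<\vartheta$. When $0\le\vartheta<\infty$, $f^\natural(\theta)=\theta\Gamma<f(\theta)$ for $\theta>\vartheta$, and \[f^\natural(\vartheta)=\begin{cases} f(\vartheta)\ge\mathrm{cl}\,f(\vartheta)=\vartheta\Gamma & \text{when }\vartheta=\underline\psi,\\ \vartheta\Gamma=\mathrm{cl}\,f(\vartheta)\le f(\vartheta)&\text{when }\vartheta>\underline\psi.\end{cases}\] In all cases \[\Gamma=\inf_{\theta>0}\frac{f^\natural(\theta)}{\theta}=\inf_{\theta>0}\frac{f(\theta)}{\theta}.\] When $0\le\vartheta<\infty$, $\Gamma=f(\vartheta)/\vartheta$ provided $f$ is lower semicontinuous at $\vartheta$, and when $\vartheta=\infty$, $\Gamma=\lim_{\theta\uparrow\infty}f(\theta)/\theta$.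
   Context: $\Phi_f=\{\theta:f(\theta)<\infty\}$. $f^*(x)=\sup_\theta\{\theta x-f(\theta)\}$; $\Gamma(g)=\inf\{a:g(a)>0\}$. $f^\natural$ is the maximal convex function with $f^\natural\le f$ and $f^\natural(\theta)/\theta$ decreasing in $\theta\in(0,\infty)$ (identically $-\infty$ if no function satisfies these constraints); $\vartheta(f)=\sup\{\theta:f(\theta)=f^\natural(\theta)\}$ (possibly $+\infty$, and $-\infty$ if the set is empty). $\mathrm{cl}\,f$ is the closure of $f$: the lower semicontinuous convex function obtained by adjusting the values of $f$ at the end-points of the interval $\Phi_f$ so as to make it lower semicontinuous. *)

(* Defs.v *)
From HB Require Import structures.
From mathcomp Require Import all_boot all_order all_algebra.
From mathcomp Require Import all_classical all_reals all_analysis.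
Set Implicit Arguments. Unset Strict Implicit. Unset Printing Implicit Defensive.
Import Order.TTheory GRing.Theory Num.Theory.
Import numFieldNormedType.Exports.
Local Open Scope classical_set_scope.
Local Open Scope ring_scope.
Local Open Scope ereal_scope.

Section Defs.
Variable R : realType.

Definition econvex (g : R -> \bar R) : Prop :=
  forall (x y t : R), (0 < t < 1)%R ->
    g (t * x + (1 - t) * y)%R <= t%:E * g x + (1 - t)%:E * g y.

Definition Phi (f : R -> \bar R) : set R := [set t | f t < +oo].

Definition conj (f : R -> \bar R) (x : R) : \bar R :=
  ereal_sup [set (t * x)%:E - f t | t in [set: R]].

Definition Gam (g : R -> \bar R) : \bar R :=
  ereal_inf [set a%:E | a in [set a : R | 0 < g a]].

Definition ratio_decr (g : R -> \bar R) : Prop :=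
  forall x y : R, (0 < x)%R -> (x <= y)%R -> g y * (y^-1)%:E <= g x * (x^-1)%:E.

Definition nat_admissible (f g : R -> \bar R) : Prop :=
  [/\ forall x, g x != -oo, econvex g, (forall x, g x <= f x) & ratio_decr g].

(* f^natural: the maximal admissible function (pointwise supremum of all
   admissible functions, which is itself admissible); identically -oo when
   there is no admissible function *)
Definition fnat (f : R -> \bar R) (t : R) : \bar R :=
  ereal_sup [set g t | g in nat_admissible f].

Definition vtheta (f : R -> \bar R) : \bar R :=
  ereal_sup [set t%:E | t in [set t : R | f t = fnat f t]].

(* closure cl f = lower semicontinuous hull: cl f(x) = liminf_{y -> x} f y
   (including y = x); for convex f this only adjusts values at the
   end-points of Phi_f *)
Definition clf (f : R -> \bar R) (x : R) : \bar R :=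
  ereal_sup [set ereal_inf [set f y | y in [set y : R | (`|y - x| < e)%R]]
            | e in [set e : R | (0 < e)%R]].

Definition lsc_at (f : R -> \bar R) (x : R) : Prop :=
  forall a : \bar R, a < f x -> \forall y \near x, a < f y.

End Defs.

(* Main.v *)
Require Import Defs.
From HB Require Import structures.
From mathcomp Require Import all_boot all_order all_algebra.
From mathcomp Require Import all_classical all_reals all_analysis.
Import Order.TTheory GRing.Theory Num.Theory.
Import numFieldNormedType.Exports.
Local Open Scope classical_set_scope.
Local Open Scope ring_scope.
Local Open Scope ereal_scope.
From mathcomp Require Import ring lra.
Set Implicit Arguments. Unset Strict Implicit. Unset Printing Implicit Defensive.
Section P.
Variable R : realType.
Variable f : R -> \bar R.
Hypothesis fN : forall t, f t != -oo.
Hypothesis fC : econvex f.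
Hypothesis fpos : exists t : R, (0 < t)%R /\ f t < +oo.
Hypothesis fneg : forall t : R, (t < 0)%R -> f t = +oo.

Lemma fcase t : f t = +oo \/ exists a : R, f t = a%:E.
Proof. move: (fN t); case: (f t) => [a _|_|//]; [by right; exists a|by left]. Qed.

Definition rr (t : R) := f t * (t^-1)%:E.
Definition Gf := ereal_inf [set rr t | t in [set t : R | (0 < t)%R]].

Lemma Gf_le t : (0 < t)%R -> Gf <= rr t.
Proof. by move=> t0; apply: ereal_inf_lbound; exists t. Qed.

Lemma rr_fin t a : (0 < t)%R -> f t = a%:E -> rr t = (a / t)%:E.
Proof. by move=> t0 ft; rewrite /rr ft -EFinM. Qed.

Lemma rr_inf t : (0 < t)%R -> f t = +oo -> rr t = +oo.
Proof. by move=> t0 ft; rewrite /rr ft gt0_mulye // lte_fin invr_gt0. Qed.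

Lemma f0neg c : f 0 = c%:E -> (c < 0)%R -> Gf = -oo.
Proof.
move=> f0 c0; case: fpos => t0 [t00 ft0].
case: (fcase t0) => [ft0'|[a fa]]; first by rewrite ft0' ltxx in ft0.
apply: eq_ninfty => M.
pose D := `|a - c - M * t0|%R.
have D0 : (0 <= D)%R by apply: normr_ge0.
pose s := Num.min (1/2)%R (- c / (D + 1))%R.
have s0 : (0 < s)%R.
  rewrite lt_min; apply/andP; split; first lra.
  apply: divr_gt0; lra.
have s1 : (s < 1)%R.
  rewrite gt_min; apply/orP; left; lra.
have hs : (s * (a - c - M * t0) <= - c)%R.
  have : (s <= - c / (D + 1))%R by rewrite ge_min lexx orbT.
  rewrite ler_pdivlMr; last by lra.
  move=> h; apply: le_trans (_ : s * D <= _)%R; last first.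
    apply: le_trans h; rewrite mulrDr mulr1; lra.
  by apply: ler_wpM2l; [lra| apply: ler_norm].
have := @fC t0 0%R s; rewrite s0 s1 /= mulr0 addr0 fa f0 -!EFinM -EFinD => /(_ isT) hle.
have st0 : (0 < s * t0)%R by apply: mulr_gt0.
have GF := Gf_le st0.
apply: (le_trans GF).
case: (fcase (s * t0)) => [finf|[b fb]]; first by rewrite finf leye_eq in hle.
rewrite (rr_fin st0 fb) lee_fin ler_pdivrMr //.
rewrite fb lee_fin in hle; nra.
Qed.

Lemma Gam_eq : Gam (conj f) = Gf.
Proof.
apply/eqP; rewrite eq_le; apply/andP; split.
- apply: le_ereal_inf_tmp => _ [t t0 <-].
  case: (fcase t) => [ft|[a fa]]; first by rewrite (rr_inf t0 ft) leey.
  rewrite (rr_fin t0 fa); apply/lee_addgt0Pr => e e0.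
  apply: ereal_inf_lbound; exists (a/t + e)%R => //=.
  rewrite /conj; apply: (@lt_le_trans _ _ ((t * (a/t+e))%R%:E - f t)); last first.
    by apply: ereal_sup_ubound; exists t.
  rewrite fa -EFinB lte_fin mulrDr [(t * (a / t))%R]mulrC divfK ?gt_eqF //.
  by rewrite addrAC subrr add0r mulr_gt0.
- apply: le_ereal_inf_tmp => _ [a /= ha <-].
  have [y [t _ <-] hy] := ereal_sup_gt ha.
  case: (fcase t) => [ft|[b fb]]; first by rewrite ft /= in hy.
  rewrite fb -EFinB lte_fin subr_gt0 in hy.
  case: (ltgtP t 0%R) => [tn|tp|te].
  + by rewrite fneg in fb.
  + rewrite (le_trans (Gf_le tp)) // (rr_fin tp fb) lee_fin ler_pdivrMr //.
    by rewrite mulrC ltW.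
  + rewrite te mul0r in hy; subst t.
    by rewrite (f0neg fb hy) leNye.
Qed.

Lemma gcase (g : R -> \bar R) t : g t != -oo -> g t = +oo \/ exists a : R, g t = a%:E.
Proof. case: (g t) => [a _|_|//]; [by right; exists a|by left]. Qed.

Lemma slope g : nat_admissible f g -> forall x th K s, (0 <= x)%R -> (x < th)%R ->
  (0 < s)%R -> rr s < K%:E -> g th <= g x + ((th - x) * K)%:E.
Proof.
move=> [gN gC gle gr] x th K s x0 xth s0 hs.
case: (gcase (gN x)) => [->|[a gxE]]; first by rewrite addye ?leey.
have gsK : g s * (s^-1)%:E < K%:E.
  apply: le_lt_trans hs; apply: lee_wpmul2r => //; first by rewrite lee_fin invr_ge0 ltW.
case: (gcase (gN s)) => [gsE|[b gsE]].
  by rewrite gsE gt0_mulye ?lte_fin ?invr_gt0 // in gsK.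
pose c := (b / s)%R.
have cK : (c < K)%R by rewrite gsE -EFinM lte_fin in gsK.
have gy : forall y, (s <= y)%R -> exists d, g y = d%:E /\ (d <= y * c)%R.
  move=> y sy; have := gr s y s0 sy; rewrite gsE -EFinM.
  have y0 : (0 < y)%R by apply: lt_le_trans sy.
  case: (gcase (gN y)) => [->|[d ->]].
    by rewrite gt0_mulye ?lte_fin ?invr_gt0 // leye_eq.
  by rewrite -EFinM lee_fin ler_pdivrMr // mulrC => h; exists d.
pose y := Num.max (Num.max s (th+1)%R) ((K*x - a)/(K - c))%R.
have sy : (s <= y)%R by rewrite /y !le_max lexx.
have thy : (th + 1 <= y)%R by rewrite /y !le_max lexx orbT.
have Ky : ((K*x - a)/(K - c) <= y)%R by rewrite /y !le_max lexx orbT.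
rewrite ler_pdivrMr ?subr_gt0 // in Ky.
have [d [gyE dy]] := gy y sy.
have yx : (0 < y - x)%R by lra.
pose mu := ((th - x) / (y - x))%R.
have mueq : (mu * (y - x) = th - x)%R by rewrite /mu divfK ?gt_eqF.
have mu0 : (0 < mu)%R by apply: divr_gt0; lra.
have mu1 : (mu < 1)%R by rewrite /mu ltr_pdivrMr // mul1r; lra.
have l01 : (0 < 1 - mu < 1)%R by apply/andP; split; lra.
have := gC x y (1 - mu)%R l01.
have -> : ((1 - mu) * x + (1 - (1 - mu)) * y = th)%R.
  have -> : (1 - (1 - mu) = mu)%R by lra.
  by rewrite mulrBl mul1r; move: mueq; rewrite mulrBr; lra.
rewrite gxE gyE -!EFinM -EFinD -EFinD.
case: (gcase (gN th)) => [->|[e ->]]; first by rewrite leye_eq.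
rewrite !lee_fin => he.
have h1 : (mu * d <= mu * (y * c))%R by apply: ler_wpM2l => //; exact: ltW.
have h2 : (mu * (y * c - a) <= mu * (K * (y - x)))%R.
  by apply: ler_wpM2l; [exact: ltW| nra].
have h3 : (mu * (K * (y - x)) = (th - x) * K)%R by rewrite mulrCA mueq mulrC.
nra.
Qed.

Lemma exs K : Gf < K%:E -> exists2 s, (0 < s)%R & rr s < K%:E.
Proof. by move=> /ereal_inf_lt [_ [s s0 <-] hs]; exists s. Qed.

Lemma noadm : Gf = -oo -> forall g, ~ nat_admissible f g.
Proof.
move=> Gm g ga; have [gN _ gle _] := ga.
case: fpos => t0 [t00 ft0].
case: (gcase (gN t0)) => [e|[a ga0]].
  by move: (gle t0); rewrite e leye_eq => /eqP h; rewrite h ltxx in ft0.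
have th : (t0 < t0 + 1)%R by lra.
case: (gcase (gN (t0 + 1)%R)) => [e|[b gb]].
  have [s s0 hs] : exists2 s, (0 < s)%R & rr s < 0%R%:E by apply: exs; rewrite Gm ltNyr.
  have := slope ga (ltW t00) th s0 hs.
  by rewrite e ga0 -EFinD leye_eq.
have [s s0 hs] : exists2 s, (0 < s)%R & rr s < (b - a - 1)%R%:E by apply: exs; rewrite Gm ltNyr.
have := slope ga (ltW t00) th s0 hs.
rewrite gb ga0 -EFinD lee_fin; lra.
Qed.

Lemma fnat_le t : fnat f t <= f t.
Proof. by apply: ge_ereal_sup => _ [g [_ _ gle _] <-]. Qed.

Lemma fnat_ninf : Gf = -oo -> forall t, fnat f t = -oo.
Proof.
move=> Gm t; apply/eqP; rewrite -leeNy_eq; apply: ge_ereal_sup => _ [g ga <-].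
by case: (noadm Gm ga).
Qed.

Lemma vt_ninf : Gf = -oo -> vtheta f = -oo.
Proof.
move=> Gm; apply/eqP; rewrite -leeNy_eq; apply: ge_ereal_sup => _ [t ht <-].
by move: (fN t); rewrite ht fnat_ninf.
Qed.

Lemma Gf_lt : Gf < +oo.
Proof.
case: fpos => t0 [t00 ft0]; apply: le_lt_trans (Gf_le t00) _.
case: (fcase t0) => [e|[a fa]]; first by rewrite e ltxx in ft0.
by rewrite (rr_fin t00 fa) ltry.
Qed.

Lemma convinf (l : R) (u v : \bar R) : (0 < l < 1)%R -> u != -oo -> v != -oo ->
  (u = +oo \/ v = +oo) -> l%:E * u + (1 - l)%:E * v = +oo.
Proof.
move=> /andP[l0 l1] uN vN [->|->].
  rewrite gt0_muley ?lte_fin // addye //.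
  case: v vN => [r||] //= _; by rewrite ?gt0_muley ?lte_fin ?subr_gt0.
rewrite gt0_muley ?lte_fin ?subr_gt0 // addey //.
case: u uN => [r||] //= _; by rewrite ?gt0_muley ?lte_fin.
Qed.

Section Fin.
Variable G : R.
Hypothesis HG : Gf = G%:E.

Definition h x := f x - (G * x)%:E.
Definition M t := ereal_inf [set h x | x in [set x : R | (0 <= x <= t)%R]].
Definition U t := if (t < 0)%R then +oo else (G * t)%:E + M t.

Lemma hE t : (f t = +oo /\ h t = +oo) \/ exists a, f t = a%:E /\ h t = (a - G * t)%:E.
Proof.
rewrite /h; case: (fcase t) => [->|[a ->]]; first by left.
by right; exists a; rewrite EFinB.
Qed.

Lemma hN t : h t != -oo.
Proof. by case: (hE t) => [[_ ->]|[a [_ ->]]]. Qed.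

Lemma f0ge0 : 0 <= f 0%R.
Proof.
case: (fcase 0%R) => [->|[c fc]]; first by rewrite leey.
rewrite fc lee_fin; rewrite leNgt; apply/negP => c0.
by move: HG; rewrite (f0neg fc c0).
Qed.

Lemma fge t : (0 <= t)%R -> (G * t)%:E <= f t.
Proof.
rewrite le_eqVlt => /orP[/eqP <-|t0]; first by rewrite mulr0 f0ge0.
have := Gf_le t0; rewrite HG.
case: (fcase t) => [->|[a fa]]; first by rewrite leey.
by rewrite (rr_fin t0 fa) fa !lee_fin ler_pdivlMr // mulrC.
Qed.

Lemma hge0 t : (0 <= t)%R -> 0 <= h t.
Proof.
move=> t0; have := fge t0.
case: (hE t) => [[_ ->]|[a [-> ->]]]; first by rewrite leey.
by rewrite !lee_fin subr_ge0.
Qed.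

Lemma hconv : econvex h.
Proof.
move=> x y l l01.
case: (hE x) => [[_ hx]|[a [fx hx]]].
  by rewrite convinf ?hN ?leey //; left.
case: (hE y) => [[_ hy]|[b [fy hy]]].
  by rewrite convinf ?hN ?leey //; right.
have := fC x y l01; rewrite fx fy.
case: (hE (l * x + (1 - l) * y)%R) => [[-> _]|[d [-> ->]]].
  by rewrite -!EFinM -EFinD leye_eq.
rewrite hx hy -!EFinM -EFinD !lee_fin => hd; nra.
Qed.

Lemma Mge0 t : 0 <= M t.
Proof. by apply: le_ereal_inf_tmp => _ [x /andP[x0 _] <-]; exact: hge0. Qed.

Lemma M_le x t : (0 <= x)%R -> (x <= t)%R -> M t <= h x.
Proof. by move=> x0 xt; apply: ereal_inf_lbound; exists x => //; apply/andP. Qed.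

Lemma M_anti s t : (s <= t)%R -> M t <= M s.
Proof.
move=> st; apply: le_ereal_inf_tmp => _ [x /andP[x0 xs] <-].
by apply: M_le => //; apply: le_trans st.
Qed.

Lemma MN t : M t != -oo.
Proof. by have := Mge0 t; case: (M t). Qed.

Lemma hfin_lt x (c : R) : h x < c%:E -> exists d, h x = d%:E /\ (d < c)%R.
Proof.
case: (hE x) => [[_ ->]|[a [_ ->]]] //; by rewrite lte_fin => ?; exists (a - G * x)%R.
Qed.

Lemma Mconv a b l : (0 <= a)%R -> (0 <= b)%R -> (0 < l < 1)%R ->
  M (l * a + (1 - l) * b)%R <= l%:E * M a + (1 - l)%:E * M b.
Proof.
move=> a0 b0 l01; have /andP[l0 l1] := l01.
case: (gcase (MN a)) => [Ma|[ma Ma]]; first by rewrite convinf ?MN ?leey //; left.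
case: (gcase (MN b)) => [Mb|[mb Mb]]; first by rewrite convinf ?MN ?leey //; right.
rewrite Ma Mb -!EFinM -EFinD; apply/lee_addgt0Pr => e e0.
have Mla : M a < (ma + e)%R%:E by rewrite Ma lte_fin ltrDl.
have Mlb : M b < (mb + e)%R%:E by rewrite Mb lte_fin ltrDl.
have [_ [x /andP[x0 xa] <-] hx] := ereal_inf_lt Mla.
have [_ [y /andP[y0 yb] <-] hy] := ereal_inf_lt Mlb.
have [dx [hxE dxl]] := hfin_lt hx.
have [dy [hyE dyl]] := hfin_lt hy.
have z0 : (0 <= l * x + (1 - l) * y)%R by nra.
have zc : (l * x + (1 - l) * y <= l * a + (1 - l) * b)%R by nra.
apply: le_trans (M_le z0 zc) _.
apply: le_trans (hconv x y l01) _.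
rewrite hxE hyE -!EFinM -!EFinD lee_fin; nra.
Qed.

Lemma UN t : U t != -oo.
Proof.
rewrite /U; case: ifP => // _.
by case: (gcase (MN t)) => [->|[m ->]]; rewrite ?addey.
Qed.

Lemma U_ge0 t : (0 <= t)%R -> U t = (G * t)%:E + M t.
Proof. by rewrite /U leNgt => /negbTE ->. Qed.

Lemma U_neg t : (t < 0)%R -> U t = +oo.
Proof. by rewrite /U => ->. Qed.

Lemma U_Minf t : (0 <= t)%R -> M t = +oo -> U t = +oo.
Proof. by move=> t0 Mt; rewrite U_ge0 // Mt addey. Qed.

Lemma UA : nat_admissible f U.
Proof.
split.
- exact: UN.
- move=> x y l l01; have /andP[l0 l1] := l01.
  case: (ltP x 0%R) => x0; first by rewrite (U_neg x0) convinf ?UN ?leey //; left.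
  case: (ltP y 0%R) => y0; first by rewrite (U_neg y0) convinf ?UN ?leey //; right.
  case: (gcase (MN x)) => [Mx|[mx Mx]]; first by rewrite (U_Minf x0 Mx) convinf ?UN ?leey //; left.
  case: (gcase (MN y)) => [My|[my My]]; first by rewrite (U_Minf y0 My) convinf ?UN ?leey //; right.
  have c0 : (0 <= l * x + (1 - l) * y)%R by nra.
  have := Mconv x0 y0 l01; rewrite Mx My -!EFinM -EFinD.
  rewrite !U_ge0 // Mx My.
  case: (gcase (MN (l * x + (1 - l) * y)%R)) => [->|[mc ->]]; first by rewrite leye_eq.
  rewrite -!EFinD !lee_fin => hm; nra.
- move=> t; case: (ltP t 0%R) => t0; first by rewrite (fneg t0) leey.
  rewrite U_ge0 //; have := M_le t0 (lexx t).
  case: (hE t) => [[-> _]|[a [-> ->]]]; first by rewrite leey.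
  case: (gcase (MN t)) => [->|[m ->]]; first by rewrite leye_eq.
  by rewrite -EFinD !lee_fin => hm; lra.
- move=> x y x0 xy; have y0 : (0 < y)%R by apply: lt_le_trans xy.
  rewrite (U_ge0 (ltW x0)) (U_ge0 (ltW y0)).
  case: (gcase (MN x)) => [->|[mx Mx]].
    by rewrite addey // gt0_mulye ?lte_fin ?invr_gt0 // leey.
  have := M_anti xy; have := Mge0 y; rewrite Mx.
  case: (gcase (MN y)) => [->|[my ->]]; first by rewrite leye_eq.
  rewrite !lee_fin => my0 mxy.
  rewrite !mulrDl mulfK ?gt_eqF // mulfK ?gt_eqF // lerD2l.
  apply: (@le_trans _ _ (my / x)%R).
    by apply: ler_wpM2l => //; rewrite lef_pV2 ?posrE.
  by apply: ler_wpM2r => //; rewrite invr_ge0 ltW.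
Qed.

Lemma gslope g : nat_admissible f g -> forall x t, (0 <= x)%R -> (x <= t)%R ->
  g t <= g x + ((t - x) * G)%:E.
Proof.
move=> ga x t x0; rewrite le_eqVlt => /orP[/eqP <-|xt].
  by rewrite subrr mul0r adde0.
have [gN _ _ _] := ga.
case: (gcase (gN x)) => [->|[a gxE]]; first by rewrite addye ?leey.
rewrite gxE.
apply/lee_addgt0Pr => e e0.
have tx : (0 < t - x)%R by rewrite subr_gt0.
have [s s0 hs] : exists2 s, (0 < s)%R & rr s < (G + e / (t - x))%R%:E.
  by apply: exs; rewrite HG lte_fin ltrDl divr_gt0.
apply: le_trans (slope ga x0 xt s0 hs) _.
by rewrite gxE -!EFinD lee_fin mulrDr mulrCA divff ?gt_eqF // mulr1 addrA lexx.
Qed.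

Lemma gU g : nat_admissible f g -> forall t, (0 <= t)%R -> g t <= (G * t)%:E + M t.
Proof.
move=> ga t t0; have [gN _ gle _] := ga.
case: (gcase (MN t)) => [->|[m Mt]]; first by rewrite addey ?leey.
rewrite Mt -EFinD; apply/lee_addgt0Pr => e e0.
have Mlt : M t < (m + e)%R%:E by rewrite Mt lte_fin ltrDl.
have [_ [x /andP[x0 xt] <-] hx] := ereal_inf_lt Mlt.
have [d [hxE dl]] := hfin_lt hx.
apply: le_trans (gslope ga x0 xt) _.
apply: le_trans (leeD2r _ (gle x)) _.
move: hxE; rewrite /h.
case: (fcase x) => [->|[a ->]] //.
rewrite -EFinB => -[hd]; rewrite -EFinD lee_fin; nra.
Qed.

Lemma fnat_U t : fnat f t = U t.
Proof.
apply/eqP; rewrite eq_le; apply/andP; split.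
  case: (ltP t 0%R) => t0; first by rewrite U_neg // leey.
  by apply: ge_ereal_sup => _ [g ga <-]; rewrite U_ge0 //; exact: gU.
by apply: ereal_sup_ubound; exists U => //; exact: UA.
Qed.

Lemma fE t : f t = (G * t)%:E + h t.
Proof. by rewrite /h addeC subeK. Qed.

Lemma inE_i s : (0 <= s)%R -> f s = fnat f s -> h s <= M s.
Proof.
move=> s0; rewrite fnat_U U_ge0 // fE => /eqP; rewrite eq_le => /andP[hle _].
by rewrite leeD2lE in hle.
Qed.

Lemma inE_ii t : (0 <= t)%R -> h t <= M t -> fnat f t = f t.
Proof.
move=> t0 hM; rewrite fnat_U U_ge0 // fE; congr (_ + _).
by apply/eqP; rewrite eq_le hM M_le.
Qed.

Lemma hM0 : h 0%R <= M 0%R.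
Proof.
apply: le_ereal_inf_tmp => _ [x /andP[x0 x0'] <-].
by have -> : x = 0%R by apply/eqP; rewrite eq_le x0 x0'.
Qed.

Lemma vt_ge0 : 0 <= vtheta f.
Proof.
apply: ereal_sup_ubound; exists 0%R => //=.
by rewrite inE_ii // hM0.
Qed.

Lemma hmid x t y : (x < t)%R -> (t < y)%R -> exists mu,
  [/\ (0 < mu < 1)%R, (mu * (y - x) = t - x)%R & h t <= (1 - mu)%:E * h x + mu%:E * h y].
Proof.
move=> xt ty; have yx : (0 < y - x)%R by lra.
pose mu := ((t - x) / (y - x))%R.
have mueq : (mu * (y - x) = t - x)%R by rewrite /mu divfK ?gt_eqF.
have mu0 : (0 < mu)%R by apply: divr_gt0; lra.
have mu1 : (mu < 1)%R by rewrite /mu ltr_pdivrMr // mul1r; lra.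
exists mu; split => //; first by apply/andP.
have l01 : (0 < 1 - mu < 1)%R by apply/andP; split; lra.
have := hconv x y l01.
have -> : (1 - (1 - mu) = mu)%R by lra.
have -> // : ((1 - mu) * x + mu * y = t)%R.
by rewrite mulrBl mul1r; move: mueq; rewrite mulrBr; lra.
Qed.

Lemma below_vt t : (0 <= t)%R -> t%:E < vtheta f -> h t <= M t.
Proof.
move=> t0 /ereal_sup_gt [_ [s /= fs <-]]; rewrite lte_fin => ts.
have hs := inE_i (le_trans t0 (ltW ts)) fs.
apply: le_ereal_inf_tmp => _ [x /andP[x0 xt] <-].
have [->|xt'] := eqVneq x t; first by [].
have xt2 : (x < t)%R by rewrite lt_neqAle xt' xt.
have [mu [/andP[mu0 mu1] mueq hmu]] := hmid xt2 ts.
have hsx : h s <= h x by apply: le_trans hs (M_le x0 (ltW (lt_trans xt2 ts))).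
case: (gcase (hN x)) => [->|[a hx]]; first by rewrite leey.
move: hsx hmu; rewrite hx.
case: (gcase (hN s)) => [->|[b ->]]; first by rewrite leye_eq.
case: (gcase (hN t)) => [->|[c ->]].
  by rewrite -!EFinM -EFinD leye_eq.
rewrite -!EFinM -EFinD !lee_fin => ba cab; nra.
Qed.

Lemma small_h e : (0 < e)%R -> exists2 y, (0 < y)%R & h y < (e * y)%:E.
Proof.
move=> e0.
have [s s0 hs] : exists2 s, (0 < s)%R & rr s < (G + e)%R%:E.
  by apply: exs; rewrite HG lte_fin ltrDl.
exists s => //.
case: (fcase s) => [fs|[a fs]]; first by rewrite (rr_inf s0 fs) in hs.
rewrite (rr_fin s0 fs) lte_fin ltr_pdivrMr // in hs.
by rewrite /h fs -EFinB lte_fin; lra.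
Qed.

Lemma above_vt t : vtheta f < t%:E -> M t = 0.
Proof.
move=> vtt.
have t0 : (0 < t)%R by rewrite -lte_fin; apply: le_lt_trans vt_ge0 vtt.
have Mlt : M t < h t.
  rewrite ltNge; apply/negP => hM.
  have e := inE_ii (ltW t0) hM.
  have : t%:E <= vtheta f by apply: ereal_sup_ubound; exists t => //=; rewrite e.
  by rewrite leNgt vtt.
have [_ [x /andP[x0 xt] <-] hxt] := ereal_inf_lt Mlt.
have xt2 : (x < t)%R.
  rewrite lt_neqAle xt andbT; apply/negP => /eqP ext.
  by rewrite ext ltxx in hxt.
case: (gcase (MN t)) => [Mt|[m Mt]]; first by rewrite Mt ltNge leey in Mlt.
have m0 : (0 <= m)%R by rewrite -lee_fin -Mt Mge0.
rewrite Mt; congr EFin; apply/eqP; rewrite eq_le m0 andbT leNgt; apply/negP => mpos.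
case: (gcase (hN x)) => [hx|[a hx]]; first by rewrite hx ltNge leey in hxt.
have ma : (m <= a)%R by rewrite -lee_fin -Mt -hx M_le.
have Yle : forall e y, (0 < e)%R -> (e * t <= m)%R -> (0 < y)%R -> (y <= t)%R ->
    h y < (e * y)%:E -> False.
  move=> e y e0 etm y0 yt hy.
  have [d [hyE dl]] := hfin_lt hy.
  have := M_le (ltW y0) yt; rewrite Mt hyE lee_fin => md.
  have : (e * y <= e * t)%R by apply: ler_wpM2l => //; exact: ltW.
  lra.
case: (gcase (hN t)) => [ht|[b ht]].
  have k0 : (0 < m / t)%R by apply: divr_gt0.
  have [y y0 hy] := small_h k0.
  case: (leP y t) => yt.
    by apply: (Yle _ y k0 _ y0 yt hy); rewrite divfK ?gt_eqF.
  have [mu [_ _ hmu]] := hmid xt2 yt.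
  have [d [hyE _]] := hfin_lt hy.
  by move: hmu; rewrite ht hx hyE -!EFinM -EFinD leye_eq.
have ba : (a < b)%R by rewrite -lte_fin -hx -ht.
pose e := Num.min (m / t)%R ((b - a) / (t - x))%R.
have e0 : (0 < e)%R.
  rewrite lt_min; apply/andP; split; apply: divr_gt0 => //; lra.
have etm : (e * t <= m)%R.
  have : (e <= m / t)%R by rewrite ge_min lexx.
  by rewrite ler_pdivlMr.
have etx : (e * (t - x) <= b - a)%R.
  have : (e <= (b - a) / (t - x))%R by rewrite ge_min lexx orbT.
  by rewrite ler_pdivlMr // subr_gt0.
have [y y0 hy] := small_h e0.
case: (leP y t) => yt; first exact: (Yle _ y e0 etm y0 yt hy).
have [mu [/andP[mu0 mu1] mueq hmu]] := hmid xt2 yt.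
have [d [hyE dl]] := hfin_lt hy.
move: hmu; rewrite ht hx hyE -!EFinM -EFinD lee_fin => hb.
have h1 : (mu * d < mu * (e * y))%R by rewrite ltr_pM2l.
have h2 : (e * (mu * (y - x)) = e * (t - x))%R by rewrite mueq.
have h3 : (mu * (e * t) <= mu * a)%R by apply: ler_wpM2l; [exact: ltW|lra].
have h4 : ((e * mu) * x <= (e * mu) * t)%R by apply: ler_wpM2l; [apply: mulr_ge0; exact: ltW|exact: ltW].
clear -hb h1 h2 h3 h4 etx.
nra.
Qed.

Lemma near_v v e eps : vtheta f = v%:E -> (0 < e)%R -> (0 < eps)%R ->
  exists y, [/\ (0 <= y)%R, (`|y - v| < e)%R & h y < eps%:E].
Proof.
move=> vv e0 eps0.
have v0 : (0 <= v)%R by rewrite -lee_fin -vv vt_ge0.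
have : vtheta f < (v + e / 2)%R%:E by rewrite vv lte_fin ltrDl divr_gt0.
move=> /above_vt Mt.
have Mlt : M (v + e / 2)%R < eps%:E by rewrite Mt lte_fin.
have [_ [x /andP[x0 xt] <-] hx] := ereal_inf_lt Mlt.
case: (ltP (v - e)%R x) => vx.
  by exists x; split => //; rewrite ltr_norml; apply/andP; split; lra.
pose z := (v - e / 2)%R.
have z0 : (0 <= z)%R by rewrite /z; lra.
have hz := below_vt z0 (ltac:(rewrite vv lte_fin /z; lra)).
exists z; split => //.
  by rewrite /z ltr_norml; apply/andP; split; lra.
apply: le_lt_trans hz _; apply: le_lt_trans (M_le x0 _) hx; rewrite /z; lra.
Qed.

Lemma clf_v v : vtheta f = v%:E -> clf f v = (v * G)%:E.
Proof.
move=> vv; apply/eqP; rewrite eq_le; apply/andP; split.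
- apply: ge_ereal_sup => _ [e /= e0 <-].
  apply/lee_addgt0Pr => eps eps0.
  have G1 : (0 < 2 * (`|G| + 1))%R by apply: mulr_gt0 => //; apply: ltr_pwDr.
  pose k := (eps / (2 * (`|G| + 1)))%R.
  have k0 : (0 < k)%R by apply: divr_gt0.
  have kk : (k * (2 * (`|G| + 1)) = eps)%R by rewrite /k divfK ?gt_eqF.
  have e'0 : (0 < Num.min e k)%R by rewrite lt_min e0 k0.
  have eps2 : (0 < eps / 2)%R by apply: divr_gt0.
  have [y [y0 yv hy]] := near_v vv e'0 eps2.
  apply: ge_ereal_inf; exists (f y).
    exists y => //=; apply: lt_le_trans yv _; rewrite ge_min lexx //.
  rewrite fE; have [d [hyE dl]] := hfin_lt hy.
  rewrite hyE -!EFinD lee_fin.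
  have n1 : (G * (y - v) <= `|G| * k)%R.
    apply: le_trans (ler_norm _) _; rewrite normrM; apply: ler_wpM2l => //.
    by apply: ltW; apply: lt_le_trans yv _; rewrite ge_min lexx orbT.
  have nG : (0 <= `|G|)%R by [].
  move: n1 kk; rewrite mulrBr !mulrDr mulr1 => n1 kk.
  have : (0 <= `|G| * k)%R by apply: mulr_ge0 => //; exact: ltW.
  lra.
- apply/lee_addgt0Pr => eps eps0; rewrite -leeBlDr // -EFinB.
  have G1 : (0 < `|G| + 1)%R by apply: ltr_pwDr.
  pose e := (eps / (`|G| + 1))%R.
  have e0 : (0 < e)%R by apply: divr_gt0.
  have ee : (e * (`|G| + 1) = eps)%R by rewrite /e divfK ?gt_eqF.
  apply: (@le_trans _ _ (ereal_inf [set f y | y in [set y : R | (`|y - v| < e)%R]])); last first.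
    by apply: ereal_sup_ubound; exists e.
  apply: le_ereal_inf_tmp => _ [y /= yv <-].
  case: (ltP y 0%R) => y0; first by rewrite fneg // leey.
  apply: le_trans (fge y0); rewrite lee_fin.
  have n1 : (G * (v - y) <= `|G| * e)%R.
    apply: le_trans (ler_norm _) _; rewrite normrM distrC; apply: ler_wpM2l => //.
    exact: ltW.
  move: n1 ee; rewrite mulrBr mulrDr mulr1 => n1 ee.
  have : (0 <= `|G| * e)%R by apply: mulr_ge0 => //; exact: ltW.
  lra.
Qed.

Lemma lsc_le v c : lsc_at f v -> clf f v = c%:E -> f v <= c%:E.
Proof.
move=> lsc cl; rewrite leNgt; apply/negP => cf.
have [a [ca af]] : exists a, (c < a)%R /\ a%:E < f v.
  case: (fcase v) => [fv|[b fb]].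
    by exists (c + 1)%R; split; [lra|rewrite fv ltry].
  rewrite fb lte_fin in cf; exists ((c + b) / 2)%R; split; first lra.
  by rewrite fb lte_fin; lra.
have := lsc _ af; move=> /nbhs_ballP [e /= e0 He].
have : a%:E <= clf f v.
  apply: (@le_trans _ _ (ereal_inf [set f y | y in [set y : R | (`|y - v| < e)%R]])); last first.
    by apply: ereal_sup_ubound; exists e.
  apply: le_ereal_inf_tmp => _ [y /= yv <-]; apply: ltW; apply: He.
  by rewrite -ball_normE /ball_ /= distrC.
by rewrite cl lee_fin; lra.
Qed.

Lemma v_psi v : vtheta f = v%:E -> v%:E = ereal_inf [set t%:E | t in Phi f] ->
  fnat f v = f v.
Proof.
move=> vv vp.
have v0 : (0 <= v)%R by rewrite -lee_fin -vv vt_ge0.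
apply: inE_ii => //.
apply: le_ereal_inf_tmp => _ [x /andP[x0 xv] <-].
have [->|xv'] := eqVneq x v; first by [].
have xv2 : (x < v)%R by rewrite lt_neqAle xv' xv.
case: (hE x) => [[_ ->]|[a [fa _]]]; first by rewrite leey.
have : v%:E <= x%:E by rewrite vp; apply: ereal_inf_lbound; exists x => //; rewrite /Phi /= fa ltry.
by rewrite lee_fin leNgt xv2.
Qed.

Lemma v_gt_psi v : vtheta f = v%:E -> ereal_inf [set t%:E | t in Phi f] < v%:E ->
  fnat f v = (v * G)%:E.
Proof.
move=> vv /ereal_inf_lt [_ [p Pp <-] pv]; rewrite lte_fin in pv.
have p0 : (0 <= p)%R by rewrite leNgt; apply/negP => pn; move: Pp; rewrite /Phi /= fneg // ltxx.
have v0 : (0 <= v)%R by apply: le_trans p0 (ltW pv).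
have Mv : M v = 0.
  apply/eqP; rewrite eq_le Mge0 andbT; apply/lee_addgt0Pr => eps eps0; rewrite add0e.
  have Mp : M p <= h p by apply: M_le.
  case: (hE p) => [[fp _]|[a [fp hp]]]; first by move: Pp; rewrite /Phi /= fp ltxx.
  rewrite hp in Mp.
  case: (gcase (MN p)) => [Mp'|[mp Mpe]]; first by rewrite Mp' leye_eq in Mp.
  have mp0 : (0 <= mp)%R by rewrite -lee_fin -Mpe Mge0.
  pose D := (v - p)%R.
  have D0 : (0 < D)%R by rewrite /D subr_gt0.
  pose eta := (eps * D / (mp + 1))%R.
  have eta0 : (0 < eta)%R by apply: divr_gt0; [apply: mulr_gt0|lra].
  have etaE : (eta * (mp + 1) = eps * D)%R by rewrite /eta divfK // gt_eqF //; lra.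
  pose l := (eta / (eta + D))%R.
  have lE : (l * (eta + D) = eta)%R by rewrite /l divfK // gt_eqF //; lra.
  have l0 : (0 < l)%R by apply: divr_gt0 => //; lra.
  have l1 : (l < 1)%R by rewrite /l ltr_pdivrMr; lra.
  have l01 : (0 < l < 1)%R by rewrite l0 l1.
  have t0 : (0 <= v + eta)%R by lra.
  have := Mconv p0 t0 l01.
  have -> : (l * p + (1 - l) * (v + eta) = v)%R.
    by move: lE; rewrite /D => lE; nra.
  have Mt : M (v + eta)%R = 0 by apply: above_vt; rewrite vv lte_fin ltrDl.
  rewrite Mpe Mt.
  rewrite mule0 adde0 -EFinM => hv; apply: le_trans hv _; rewrite lee_fin.
  have h1 : (l * D * (mp + 1) <= eta * (mp + 1))%R.
    by apply: ler_wpM2r; [lra|nra].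
  have h2 : (D * (l * (mp + 1)) <= D * eps)%R by rewrite etaE in h1; nra.
  rewrite ler_pM2l // in h2; nra.
by rewrite fnat_U U_ge0 // Mv adde0 mulrC.
Qed.

Lemma rr_anti x y : vtheta f = +oo -> (0 < x)%R -> (x <= y)%R -> rr y <= rr x.
Proof.
move=> vinf x0 xy; have y0 : (0 < y)%R by apply: lt_le_trans xy.
have fx := inE_ii (ltW x0) (below_vt (ltW x0) (ltac:(by rewrite vinf ltry))).
have fy := inE_ii (ltW y0) (below_vt (ltW y0) (ltac:(by rewrite vinf ltry))).
have [_ _ _ Ur] := UA.
by rewrite /rr -fx -fy !fnat_U; apply: Ur.
Qed.

Lemma lim_vt : vtheta f = +oo -> rr t @[t --> +oo%R] --> G%:E.
Proof.
move=> vinf.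
pose k (t : R) := rr (Num.max t 1%R).
have m1 (t : R) : (0 < Num.max t 1%R)%R.
  by apply: (@lt_le_trans _ _ 1%R); rewrite ?ltr01 // le_max lexx orbT.
have kmon : {homo k : n m / (n <= m)%R >-> m <= n}.
  move=> a b ab; apply: rr_anti => //.
  by rewrite ge_max !le_max ab lexx !orbT.
have hk := nonincreasing_cvge kmon.
have infk : ereal_inf (range k) = G%:E.
  apply/eqP; rewrite eq_le; apply/andP; split.
    rewrite -HG; apply: le_ereal_inf_tmp => _ [t t0 <-].
    apply: (@le_trans _ _ (k t)); first by apply: ereal_inf_lbound; exists t.
    by apply: rr_anti => //; rewrite le_max lexx.
  by apply: le_ereal_inf_tmp => _ [t _ <-]; rewrite -HG; apply: Gf_le.
rewrite infk in hk; apply: cvg_trans hk; apply: near_eq_cvg.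
exists 1%R; split; first exact: num_real.
by move=> t t1 /=; rewrite /k max_l // ltW.
Qed.

End Fin.

Lemma clf_le x : clf f x <= f x.
Proof.
apply: ge_ereal_sup => _ [e /= e0 <-]; apply: ge_ereal_inf; exists (f x) => //.
by exists x => //=; rewrite subrr normr0.
Qed.

Lemma main :
  let Gamma := Gam (conj f) in
  let vt := vtheta f in
  let psi := ereal_inf [set t%:E | t in Phi f] in
  [/\ Gamma = -oo -> (forall t, fnat f t = -oo) /\ vt = -oo,
      Gamma != -oo ->
        0 <= vt /\ (forall t : R, (0 <= t)%R -> t%:E < vt -> fnat f t = f t),
      forall v : R, vt = v%:E -> (0 <= v)%R ->
        [/\ forall t : R, (v < t)%R -> fnat f t = t%:E * Gamma /\ t%:E * Gamma < f t,
            v%:E = psi ->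
              [/\ fnat f v = f v, clf f v <= f v & clf f v = v%:E * Gamma]
          & psi < v%:E ->
              [/\ fnat f v = v%:E * Gamma, v%:E * Gamma = clf f v & clf f v <= f v]],
      Gamma = ereal_inf [set fnat f t * (t^-1)%:E | t in [set t : R | (0 < t)%R]]
        /\ Gamma = ereal_inf [set f t * (t^-1)%:E | t in [set t : R | (0 < t)%R]]
    &
      (forall v : R, vt = v%:E -> (0 < v)%R -> lsc_at f v ->
        Gamma = f v * (v^-1)%:E)
    /\ (vt = +oo -> f t * (t^-1)%:E @[t --> +oo%R] --> Gamma)].
Proof.
move=> Gamma vt psi; rewrite {}/Gamma {}/vt {}/psi Gam_eq.
have [Gm|[G HG]] : Gf = -oo \/ exists G, Gf = G%:E.
  by move: Gf_lt; case: Gf => [G||] hh; [right; exists G|rewrite ltxx in hh|left].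
- split.
  + by move=> _; split; [exact: fnat_ninf | exact: vt_ninf].
  + by rewrite Gm eqxx.
  + by move=> v; rewrite vt_ninf.
  + split => //; rewrite Gm; apply/eqP; rewrite eq_sym -leeNy_eq.
    apply: (@le_trans _ _ (fnat f 1%R * (1%R^-1)%:E)).
      by apply: ereal_inf_lbound; exists 1%R => //=.
    by rewrite fnat_ninf // invr1 mule1.
  + by split; [move=> v; rewrite vt_ninf | rewrite vt_ninf].
split.
- by rewrite HG.
- move=> _; split; first exact: (vt_ge0 HG).
  by move=> t t0 tv; exact: (inE_ii HG t0 (below_vt HG t0 tv)).
- move=> v vv v0; split.
  + move=> t vt'.
    have ta : vtheta f < t%:E by rewrite vv lte_fin.
    have t0 : (0 <= t)%R by apply: le_trans v0 (ltW vt').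
    have Mt := above_vt HG ta.
    have fnt : fnat f t = (G * t)%:E by rewrite (fnat_U HG) (U_ge0 G t0) Mt adde0.
    rewrite fnt HG -EFinM mulrC; split => //.
    have hpos : 0 < h G t.
      rewrite ltNge; apply/negP => hle.
      have e := inE_ii HG t0 (le_trans hle (Mge0 HG t)).
      have : t%:E <= vtheta f by apply: ereal_sup_ubound; exists t => //=; rewrite e.
      by rewrite leNgt ta.
    rewrite (fE G t).
    case: (hE G t) => [[_ ->]|[b [_ hb]]]; first by rewrite addey // ltry.
    by rewrite hb -EFinD lte_fin mulrC ltrDl -lte_fin -hb.
  + move=> vp; split.
    * exact: (v_psi HG vv vp).
    * exact: clf_le.
    * by rewrite (clf_v HG vv) HG -EFinM mulrC.
  + move=> vp; split.
    * by rewrite (v_gt_psi HG vv vp) HG -EFinM.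
    * by rewrite (clf_v HG vv) HG -EFinM.
    * exact: clf_le.
- split => //.
  apply/eqP; rewrite eq_le; apply/andP; split.
    apply: le_ereal_inf_tmp => _ [t t0 <-]; rewrite HG.
    have : (G * t)%:E <= fnat f t.
      rewrite (fnat_U HG) (U_ge0 G (ltW t0)) -{1}(adde0 (G * t)%:E).
      by apply: leeD2l; apply: Mge0.
    move=> hle.
    have h0 : 0 <= (t^-1)%:E by rewrite lee_fin invr_ge0 ltW.
    have := lee_wpmul2r h0 hle.
    by rewrite -EFinM mulfK ?gt_eqF.
  rewrite /Gf; apply: le_ereal_inf_tmp => _ [t t0 <-].
  apply: (@le_trans _ _ (fnat f t * (t^-1)%:E)).
    by apply: ereal_inf_lbound; exists t.
  by apply: lee_wpmul2r; [rewrite lee_fin invr_ge0 ltW | exact: fnat_le].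
- split.
  + move=> v vv v0 lsc.
    have cv := clf_v HG vv.
    have fv : f v = (v * G)%:E.
      apply/eqP; rewrite eq_le (lsc_le lsc cv) /=; rewrite -cv; exact: clf_le.
    by rewrite fv HG -EFinM mulrAC divff ?gt_eqF // mul1r.
  + by move=> vinf; rewrite HG; exact: lim_vt.
Qed.

End P.

Unset Implicit Arguments.
Theorem proposition9 (R : realType) (f : R -> \bar R)
  (f_nonninfty : forall t, f t != -oo)
  (f_convex : econvex f)
  (f_fin_pos : exists t : R, (0 < t)%R /\ f t < +oo)
  (f_inf_neg : forall t : R, (t < 0)%R -> f t = +oo) :
  let Gamma := Gam (conj f) in
  let vt := vtheta f in
  let psi := ereal_inf [set t%:E | t in Phi f] in
  [/\ Gamma = -oo -> (forall t, fnat f t = -oo) /\ vt = -oo,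
      Gamma != -oo ->
        0 <= vt /\ (forall t : R, (0 <= t)%R -> t%:E < vt -> fnat f t = f t),
      forall v : R, vt = v%:E -> (0 <= v)%R ->
        [/\ forall t : R, (v < t)%R -> fnat f t = t%:E * Gamma /\ t%:E * Gamma < f t,
            v%:E = psi ->
              [/\ fnat f v = f v, clf f v <= f v & clf f v = v%:E * Gamma]
          & psi < v%:E ->
              [/\ fnat f v = v%:E * Gamma, v%:E * Gamma = clf f v & clf f v <= f v]],
      Gamma = ereal_inf [set fnat f t * (t^-1)%:E | t in [set t : R | (0 < t)%R]]
        /\ Gamma = ereal_inf [set f t * (t^-1)%:E | t in [set t : R | (0 < t)%R]]
    &
      (forall v : R, vt = v%:E -> (0 < v)%R -> lsc_at f v ->
        Gamma = f v * (v^-1)%:E)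
    /\ (vt = +oo -> f t * (t^-1)%:E @[t --> +oo%R] --> Gamma)].
Proof. exact: (main f_nonninfty f_convex f_fin_pos f_inf_neg). Qed.
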